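(* Let $\mathcal{Q}$ be the exponential family of Gaussian distributions on $\mathbb{R}^d$ with diagonal covariance $\operatorname{diag}(\sigma^2)$, $\sigma^2\in\mathbb{R}^d_{>0}$, with expectation parameter $\omega=(\mu,\sigma^2+\mu\bullet\mu)$, and let $C=\{(\mu,\sigma^2+\mu\bullet\mu)\in\mathbb{R}^d\times\mathbb{R}^d:\mu\in\mathbb{R}^d_{\ge0}\}$. For $\omega=(\mu,\sigma^2+\mu\bullet\mu)$ with $\sigma^2\in\mathbb{R}^d_{>0}$, $\mathrm{proj}^{A^*}_C(\omega)=(\mu_P,\sigma^2+\mu_P\bullet\mu_P)$ where $(\mu_P)_i=\max(0,\mu_i)$ for $i=1,\dots,d$.
   Context: $\bullet$ denotes the entrywise (Hadamard) product. This family is an exponential family with sufficient statistic $\Gamma(x)=(x,x\bullet x)$, natural parameter $\theta=(\mu/\sigma^2,-\frac{1}{2\sigma^2})$ (entrywise), log-partition $A(\theta)=-\frac14\sum_i(\theta_1)_i^2/(\theta_2)_i-\frac12\sum_i\log(-2(\theta_2)_i)$, and expectation parameter $\omega=\nabla A(\theta)=(\mu,\sigma^2+\mu\bullet\mu)$; $A^*$ is the convex conjugate of $A$. $\mathrm{proj}^{A^*}_C(\omega)=\arg\min_{\omega'\in C}\{A^*(\omega')-A^*(\omega)-\langle\nabla A^*(\omega),\omega'-\omega\rangle\}$. *)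

(* Defs.v *)
From HB Require Import structures.
From mathcomp Require Import all_boot all_order all_algebra.
From mathcomp Require Import all_classical all_reals all_analysis.
Set Implicit Arguments. Unset Strict Implicit. Unset Printing Implicit Defensive.
Import Order.TTheory GRing.Theory Num.Theory.
Import numFieldNormedType.Exports.
Local Open Scope classical_set_scope.
Local Open Scope ring_scope.

Section Gauss.
Variables (R : realType) (d : nat).

Definition hadamard (x y : 'rV[R]_d) : 'rV[R]_d := \row_i (x 0 i * y 0 i).

Definition pinner (a b : 'rV[R]_d * 'rV[R]_d) : R :=
  \sum_(i < d) (a.1 0 i * b.1 0 i + a.2 0 i * b.2 0 i).

Definition natdom : set ('rV[R]_d * 'rV[R]_d) :=
  [set th : 'rV[R]_d * 'rV[R]_d | forall i, th.2 0 i < 0].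

Definition logpart (th : 'rV[R]_d * 'rV[R]_d) : R :=
  - (1/4) * (\sum_(i < d) (th.1 0 i ^+ 2 / th.2 0 i))
  - (1/2) * (\sum_(i < d) ln (- 2 * th.2 0 i)).

(* convex conjugate A^*(omega) = sup_theta <theta,omega> - A(theta)
   (A = +oo outside natdom) *)
Definition Astar (w : 'rV[R]_d * 'rV[R]_d) : \bar R :=
  ereal_sup [set ((pinner th w - logpart th)%:E) | th in natdom].

(* Bregman divergence of A^*: A^*(w') - A^*(w) - <grad A^*(w), w' - w>,
   the linear term being the differential of A^* at w applied to w' - w *)
Definition bregman (w' w : 'rV[R]_d * 'rV[R]_d) : \bar R :=
  (Astar w' - Astar w - ('d (fun v => fine (Astar v)) w (w' - w))%:E)%E.

(* p is proj^{A^*}_C(w), i.e. p is a minimizer of bregman . w over C *)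
Definition is_bregman_proj (C : set ('rV[R]_d * 'rV[R]_d))
    (w p : 'rV[R]_d * 'rV[R]_d) : Prop :=
  C p /\ forall w', C w' -> (bregman p w <= bregman w' w)%E.

Definition expar (mu s2 : 'rV[R]_d) : 'rV[R]_d * 'rV[R]_d :=
  (mu, s2 + hadamard mu mu).

Definition Cnonneg : set ('rV[R]_d * 'rV[R]_d) :=
  [set w | exists mu s2 : 'rV[R]_d,
     (forall i, 0 <= mu 0 i) /\ (forall i, 0 < s2 0 i) /\ w = expar mu s2].

End Gauss.

(* Main.v *)
Require Import Defs.
From HB Require Import structures.
From mathcomp Require Import all_boot all_order all_algebra.
From mathcomp Require Import all_classical all_reals all_analysis.
From mathcomp Require Import ring lra.
Set Implicit Arguments. Unset Strict Implicit. Unset Printing Implicit Defensive.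
Import Order.TTheory GRing.Theory Num.Theory.
Import numFieldNormedType.Exports.
Local Open Scope classical_set_scope.
Local Open Scope ring_scope.

Definition sv (R : realType) (d : nat) (v : 'rV[R]_d * 'rV[R]_d) (i : 'I_d) : R :=
  v.2 0 i - v.1 0 i ^+ 2.
Definition Gf (R : realType) (d : nat) (v : 'rV[R]_d * 'rV[R]_d) : R :=
  \sum_(i < d) (- (1/2) - (1/2) * ln (sv v i)).
Definition thetaOf (R : realType) (d : nat) (v : 'rV[R]_d * 'rV[R]_d) :
  'rV[R]_d * 'rV[R]_d :=
  (\row_i (v.1 0 i / sv v i), \row_i (- (1/2) / sv v i)).

Lemma ln_le_sub1 (R : realType) (x : R) : 0 < x -> ln x <= x - 1.
Proof.
move=> x0; have := expR_ge1Dx (ln x); rewrite lnK ?posrE //; lra.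
Qed.

Lemma coord_ineq (R : realType) (m q t1 t2 : R) : t2 < 0 -> 0 < q - m ^+ 2 ->
  t1 * m + t2 * q + (1/4) * (t1 ^+ 2 / t2) + (1/2) * ln (- 2 * t2)
  <= - (1/2) - (1/2) * ln (q - m ^+ 2).
Proof.
move=> t20 s0.
set s := q - m ^+ 2.
have a0 : 0 < - 2 * t2 by lra.
have hl : ln (- 2 * t2) + ln s <= (- 2 * t2) * s - 1.
  rewrite -lnM ?posrE //; apply: ln_le_sub1; exact: mulr_gt0.
set u := t1 ^+ 2 / t2.
have hu : u * t2 = t1 ^+ 2 by rewrite /u divfK // lt_eqF.
have key : (t1 * m + u / 4 + t2 * m ^+ 2) * (- 4 * t2) = - (t1 + 2 * t2 * m) ^+ 2.
  apply/eqP; rewrite -subr_eq0.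
  have -> : (t1 * m + u / 4 + t2 * m ^+ 2) * (- 4 * t2) - - (t1 + 2 * t2 * m) ^+ 2
    = t1 ^+ 2 - u * t2 by field.
  by rewrite hu subrr.
have : t1 * m + u / 4 + t2 * m ^+ 2 <= 0.
  have : (t1 * m + u / 4 + t2 * m ^+ 2) * (- 4 * t2) <= 0.
    by rewrite key oppr_le0 sqr_ge0.
  rewrite pmulr_lle0 //; lra.
rewrite /s in hl *; nra.
Qed.

Lemma coord_eq (R : realType) (m q : R) : 0 < q - m ^+ 2 ->
  let s := q - m ^+ 2 in
  (m / s) * m + (- (1/2) / s) * q + (1/4) * ((m / s) ^+ 2 / (- (1/2) / s))
   + (1/2) * ln (- 2 * (- (1/2) / s))
  = - (1/2) - (1/2) * ln s.
Proof.
move=> s0 s.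
have -> : - 2 * (- (1/2) / s) = s^-1 by field; rewrite gt_eqF.
rewrite lnV ?posrE //.
have sq : q = s + m ^+ 2 by rewrite /s; ring.
rewrite sq; field; rewrite gt_eqF //.
Qed.

Lemma pinner_logpart (R : realType) (d : nat) (th w : 'rV[R]_d * 'rV[R]_d) :
  pinner th w - logpart th = \sum_(i < d)
    (th.1 0 i * w.1 0 i + th.2 0 i * w.2 0 i + (1/4) * (th.1 0 i ^+ 2 / th.2 0 i)
     + (1/2) * ln (- 2 * th.2 0 i)).
Proof.
rewrite /pinner /logpart !big_split /= -!mulr_sumr; lra.
Qed.

Lemma Astar_val (R : realType) (d : nat) (w : 'rV[R]_d * 'rV[R]_d) :
  (forall i, 0 < sv w i) -> Astar w = (Gf w)%:E.
Proof.
move=> hs; apply/eqP; rewrite eq_le; apply/andP; split.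
  apply: ge_ereal_sup => _ [th thd <-]; rewrite lee_fin pinner_logpart /Gf.
  apply: ler_sum => i _; exact: coord_ineq (thd i) (hs i).
apply: ereal_sup_ubound; exists (thetaOf w).
  by move=> i /=; rewrite mxE mulNr oppr_lt0 divr_gt0.
rewrite pinner_logpart /Gf; congr (_%:E); apply: eq_bigr => i _ /=; rewrite !mxE.
have := coord_eq (hs i); rewrite /sv /=; exact.
Qed.

Definition c1 (R : realType) (d : nat) (i : 'I_d) (v : 'rV[R]_d * 'rV[R]_d) : R := v.1 0 i.
Definition c2 (R : realType) (d : nat) (i : 'I_d) (v : 'rV[R]_d * 'rV[R]_d) : R := v.2 0 i.

Lemma c1_linear (R : realType) (d : nat) (i : 'I_d) : linear (@c1 R d i).
Proof. by move=> a u v; rewrite /c1 /= !mxE. Qed.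
Lemma c2_linear (R : realType) (d : nat) (i : 'I_d) : linear (@c2 R d i).
Proof. by move=> a u v; rewrite /c2 /= !mxE. Qed.

Lemma c1_cont (R : realType) (d : nat) (i : 'I_d) : continuous (@c1 R d i).
Proof.
move=> x; apply: (@continuous_comp _ _ _ fst (fun M : 'rV[R]_d => M 0 i)).
  exact: cvg_fst.
exact: coord_continuous.
Qed.
Lemma c2_cont (R : realType) (d : nat) (i : 'I_d) : continuous (@c2 R d i).
Proof.
move=> x; apply: (@continuous_comp _ _ _ snd (fun M : 'rV[R]_d => M 0 i)).
  exact: cvg_snd.
exact: coord_continuous.
Qed.

Instance is_diff_c1 (R : realType) (d : nat) (i : 'I_d) x :
  is_diff x (@c1 R d i) (@c1 R d i).
Proof.
pose glM := GRing.isLinear.Build _ _ _ _ _ (@c1_linear R d i).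
pose gL : {linear _ -> R} := HB.pack (@c1 R d i) glM.
apply: DiffDef.
  exact: (@linear_differentiable _ _ _ gL x (@c1_cont R d i)).
exact: (@diff_lin _ _ _ gL x (@c1_cont R d i)).
Qed.
Instance is_diff_c2 (R : realType) (d : nat) (i : 'I_d) x :
  is_diff x (@c2 R d i) (@c2 R d i).
Proof.
pose glM := GRing.isLinear.Build _ _ _ _ _ (@c2_linear R d i).
pose gL : {linear _ -> R} := HB.pack (@c2 R d i) glM.
apply: DiffDef.
  exact: (@linear_differentiable _ _ _ gL x (@c2_cont R d i)).
exact: (@diff_lin _ _ _ gL x (@c2_cont R d i)).
Qed.

Lemma is_diff_ln (R : realType) (s : R) : 0 < s ->
  is_diff s (@ln R) (fun t => t * s^-1).
Proof.
move=> s0; have [dl dv] := is_derive1_ln s0.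
have hd : differentiable (@ln R) s by apply/derivable1_diffP.
apply: DiffDef => //.
rewrite diff1E //; apply/funext => t; rewrite derive1E dv.
by [].
Qed.

Lemma is_diff_sum (R : realType) (V : normedModType R) (I : Type) (r : seq I)
  (f df : I -> V -> R) x :
  (forall i, is_diff x (f i) (df i)) ->
  is_diff x (\sum_(i <- r) f i) (\sum_(i <- r) df i).
Proof.
move=> h; elim: r => [|a r IH].
  rewrite !big_nil; apply: (@is_diff_eq _ _ _ (cst 0) 0) => //.
by rewrite !big_cons; apply: is_diffD.
Qed.

Lemma is_diff_sv (R : realType) (d : nat) (i : 'I_d) (w : 'rV[R]_d * 'rV[R]_d) :
  is_diff w (fun v => sv v i) (fun h => c2 i h - 2 * c1 i w * c1 i h).
Proof.
have -> : (fun v => sv v i) = @c2 R d i - @c1 R d i * @c1 R d i.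
  by apply/funext => v; rewrite /sv /c1 /c2 /= expr2.
apply: is_diff_eq; apply/funext => h /=.
change (c2 i h - (c1 i w * c1 i h + c1 i w * c1 i h) = c2 i h - 2 * c1 i w * c1 i h).
ring.
Qed.

Lemma is_diff_term (R : realType) (d : nat) (i : 'I_d) (w : 'rV[R]_d * 'rV[R]_d) :
  0 < sv w i ->
  is_diff w (fun v => - (1/2) - (1/2) * ln (sv v i))
    (fun h => - (1/2) * ((c2 i h - 2 * c1 i w * c1 i h) / sv w i)).
Proof.
move=> pos.
have -> : (fun v => - (1/2) - (1/2) * ln (sv v i)) =
  cst (- (1/2)) + (- (1/2)) *: ((@ln R) \o (fun v => sv v i)).
  apply/funext => v; change (- (1/2) - (1/2) * ln (sv v i) = - (1/2) + (- (1/2)) * ln (sv v i)); lra.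
have H1 := is_diff_comp (is_diff_sv i w) (is_diff_ln pos).
have H2 := is_diffZ (- (1/2)) H1.
have H3 := is_diffD (@is_diff_cst R _ R (- (1/2)) w) H2.
apply: (is_diff_eq H3); apply/funext => h.
change (0 + (- (1/2)) * ((c2 i h - 2 * c1 i w * c1 i h) * (sv w i)^-1)
  = - (1/2) * ((c2 i h - 2 * c1 i w * c1 i h) / sv w i)).
by rewrite add0r.
Qed.

Lemma is_diff_Gf (R : realType) (d : nat) (w : 'rV[R]_d * 'rV[R]_d) :
  (forall i, 0 < sv w i) -> is_diff w (@Gf R d) (fun h => pinner (thetaOf w) h).
Proof.
move=> pos.
have -> : @Gf R d = \sum_(i < d) (fun v => - (1/2) - (1/2) * ln (sv v i)).
  by apply/funext => v; rewrite fct_sumE.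
have H := is_diff_sum (index_enum 'I_d) (fun i => is_diff_term (pos i)).
apply: (is_diff_eq H); apply/funext => h; rewrite fct_sumE /pinner.
apply: eq_bigr => i _ /=; rewrite !mxE /c1 /c2.
have := pos i; rewrite /sv => p; field; lra.
Qed.

Lemma near_eq_is_diff (R : realType) (V W : normedModType R) (f g df : V -> W) x :
  (\forall y \near x, f y = g y) -> is_diff x g df -> is_diff x f df.
Proof.
move=> fg [dg dv].
have fgx : f x = g x by apply: nbhs_singleton fg.
have fg0 : \forall h \near (0 : V), f (h + x) = g (h + x).
  move/nbhs0P: fg; apply: filterS => h; by rewrite addrC.
have Lg := diff_locally dg.
have /eqaddoP Lg' := Lg.
have Lf : f \o shift x = cst (f x) + 'd g x +o_ (0 : V) id.
  apply/eqaddoP => e e0.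
  have := Lg' e e0; apply: filter_app; move: fg0; apply: filterS => h fh gh.
  move: gh.
  change (`|g (h + x) - (g x + 'd g x h)| <= e * `|h| ->
    `|f (h + x) - (f x + 'd g x h)| <= e * `|h|).
  by rewrite fh fgx.
have dfe : 'd f x = 'd g x :> (V -> W).
  by apply: diff_unique => //; exact: diff_continuous.
apply: DiffDef; last by rewrite dfe.
apply/diff_locallyP; rewrite dfe; split => //; exact: diff_continuous.
Qed.

Lemma is_diff_F (R : realType) (d : nat) (w : 'rV[R]_d * 'rV[R]_d) :
  (forall i, 0 < sv w i) ->
  is_diff w (fun v => fine (Astar v)) (fun h => pinner (thetaOf w) h).
Proof.
move=> pos; apply: (near_eq_is_diff _ (is_diff_Gf pos)).
have : \forall v \near w, forall i, 0 < sv v i.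
  have fi : forall i, \forall v \near w, 0 < sv v i.
  move=> i; have c : {for w, continuous (fun v => sv v i)}.
    apply: differentiable_continuous; exact: (@ex_diff _ _ _ _ _ _ _ (is_diff_sv i w)).
  exact: (cvgr_gt _ c _ (pos i)).
  exact: (@filter_forall _ _ (fun i v => 0 < sv v i) _ _ fi).
by apply: filterS => v hv; rewrite Astar_val.
Qed.

Definition psi (R : realType) (m' s' m s : R) : R :=
  (1/2) * (s' / s - 1 - ln (s' / s)) + (m' - m) ^+ 2 / (2 * s).

Lemma sv_expar (R : realType) (d : nat) (m s : 'rV[R]_d) i :
  sv (expar m s) i = s 0 i.
Proof. rewrite /sv /expar /hadamard /= !mxE; ring. Qed.

Lemma bregman_expar (R : realType) (d : nat) (m' s' m s : 'rV[R]_d) :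
  (forall i, 0 < s' 0 i) -> (forall i, 0 < s 0 i) ->
  bregman (expar m' s') (expar m s) =
  (\sum_(i < d) psi (m' 0 i) (s' 0 i) (m 0 i) (s 0 i))%:E.
Proof.
move=> ps' ps.
have p' : forall i, 0 < sv (expar m' s') i by move=> i; rewrite sv_expar.
have p : forall i, 0 < sv (expar m s) i by move=> i; rewrite sv_expar.
rewrite /bregman (Astar_val p') (Astar_val p) (@diff_val _ _ _ _ _ _ _ (is_diff_F p)).
rewrite /= -!EFinB; congr (_%:E).
rewrite /Gf /pinner -!sumrB; apply: eq_bigr => i _.
rewrite !sv_expar /thetaOf /expar /hadamard /= !mxE !sv_expar.
have hs := ps i; have hs' := ps' i.
rewrite /psi lnM ?posrE ?invr_gt0 // lnV ?posrE //.
field; lra.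
Qed.

Lemma coord_gap (R : realType) (m' s' m s : R) : 0 <= m' -> 0 < s' -> 0 < s ->
  0 <= psi m' s' m s - psi (Num.max 0 m) s m s /\
  (psi m' s' m s - psi (Num.max 0 m) s m s = 0 -> m' = Num.max 0 m /\ s' = s).
Proof.
move=> m'0 s'0 s0.
set r := s' / s.
have r0 : 0 < r by rewrite /r divr_gt0.
have A0 : 0 <= r - 1 - ln r by have := ln_le_sub1 r0; lra.
have A1 : r - 1 - ln r = 0 -> s' = s.
  move=> h; have lr : ln r = r - 1 by lra.
  have r1 : r = 1.
    apply/eqP; apply/negPn/negP => rn1.
    have ln0 : ln r != 0.
      apply/negP => /eqP l0; move: rn1; rewrite -(lnK (x:=r)) ?posrE // l0 expR0 eqxx //.
    have := expR_gt1Dx ln0; rewrite lnK ?posrE //; lra.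
  by move: r1; rewrite /r => /(congr1 (fun t => t * s)); rewrite divfK ?gt_eqF // mul1r.
have E : psi m' s' m s - psi (Num.max 0 m) s m s =
   (1/2) * (r - 1 - ln r) + ((m' - m) ^+ 2 - (Num.max 0 m - m) ^+ 2) / (2 * s).
  rewrite /psi divff ?gt_eqF // subrr ln1 -/r; field; lra.
set B := (m' - m) ^+ 2 - (Num.max 0 m - m) ^+ 2.
have [B0 B1] : 0 <= B /\ (B = 0 -> m' = Num.max 0 m).
  rewrite /B; case: (leP 0 m) => hm.
    rewrite subrr expr0n /= subr0; split; first exact: sqr_ge0.
    by move/eqP; rewrite sqrf_eq0 subr_eq0 => /eqP.
  rewrite sub0r sqrrN; split; first nra.
  move=> h; have : m' * (m' - 2 * m) = 0 by rewrite -h; ring.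
  by move/eqP; rewrite mulf_eq0 => /orP [/eqP //| /eqP ?]; lra.
have s20 : 0 < 2 * s by lra.
have Bd : 0 <= B / (2 * s) by rewrite divr_ge0 // ltW.
rewrite E -/B; split; first lra.
move=> h.
have hA : r - 1 - ln r = 0 by lra.
have hB : B / (2 * s) = 0 by lra.
split; last exact: A1.
apply: B1; move/eqP: hB; rewrite mulf_eq0 invr_eq0 (gt_eqF s20) orbF => /eqP //.
Qed.

Unset Implicit Arguments.
Local Close Scope classical_set_scope.

Theorem proposition15 (R : realType) (d : nat) (mu s2 : 'rV[R]_d) :
  (forall i, 0 < s2 0 i) ->
  forall p : 'rV[R]_d * 'rV[R]_d,
    is_bregman_proj (@Cnonneg R d) (expar mu s2) p <->
    p = expar (\row_i Num.max 0 (mu 0 i)) s2.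
Proof.
move=> hs2 p.
set mP := \row_i Num.max 0 (mu 0 i).
have hmP : forall i, 0 <= mP 0 i by move=> i; rewrite mxE le_max lexx.
have CP : Cnonneg (expar mP s2) by exists mP, s2.
have gapE : forall m' s' : 'rV[R]_d,
  \sum_(i < d) psi (m' 0 i) (s' 0 i) (mu 0 i) (s2 0 i)
  - \sum_(i < d) psi (mP 0 i) (s2 0 i) (mu 0 i) (s2 0 i)
  = \sum_(i < d) (psi (m' 0 i) (s' 0 i) (mu 0 i) (s2 0 i)
      - psi (Num.max 0 (mu 0 i)) (s2 0 i) (mu 0 i) (s2 0 i)).
  by move=> m' s'; rewrite -sumrB; apply: eq_bigr => i _; rewrite mxE.
split.
- move=> [[m' [s' [hm' [hs' ->]]]] hmin].
  have := hmin _ CP; rewrite !bregman_expar // lee_fin => hle.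
  have nn : forall i, true -> 0 <= psi (m' 0 i) (s' 0 i) (mu 0 i) (s2 0 i)
      - psi (Num.max 0 (mu 0 i)) (s2 0 i) (mu 0 i) (s2 0 i).
    by move=> i _; exact: (@coord_gap R _ _ _ _ (hm' i) (hs' i) (hs2 i)).1.
  have sum0 : \sum_(i < d) (psi (m' 0 i) (s' 0 i) (mu 0 i) (s2 0 i)
      - psi (Num.max 0 (mu 0 i)) (s2 0 i) (mu 0 i) (s2 0 i)) = 0.
    apply/eqP; rewrite eq_le; apply/andP; split.
      by rewrite -gapE subr_le0.
    by apply: sumr_ge0.
  have each := psumr_eq0P nn sum0.
  congr (expar _ _); apply/matrixP => a j; rewrite (ord1 a) ?mxE;
    have [e1 e2] := (@coord_gap R _ _ _ _ (hm' j) (hs' j) (hs2 j)).2 (each j isT) => //.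
- move=> ->; split => // w' [m' [s' [hm' [hs' ->]]]].
  rewrite !bregman_expar // lee_fin -subr_ge0 gapE.
  apply: sumr_ge0 => i _; exact: (@coord_gap R _ _ _ _ (hm' i) (hs' i) (hs2 i)).1.
Qed.
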